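(* Let $d\geqslant 1$. (1) The subset $\mathbb{N}^d$ has complements in $\mathbb{Z}^d$. (2) $\mathbb{N}^d$ has no minimal complement in $\mathbb{Z}^d$. (3) No complement of $\mathbb{N}^d$ in $\mathbb{Z}^d$ contains a minimal complement of $\mathbb{N}^d$.
   Context: $\mathbb{N}=\{0,1,2,\dots\}$. A nonempty set $M\subseteq\mathbb{Z}^d$ is a complement of $W\subseteq \mathbb{Z}^d$ if $W+M=\mathbb{Z}^d$; it is a minimal complement if no proper subset of $M$ is a complement of $W$. *)

(* Defs.v *)
From mathcomp Require Import all_boot all_order all_algebra.
Set Implicit Arguments. Unset Strict Implicit. Unset Printing Implicit Defensive.
Import Order.TTheory GRing.Theory Num.Theory.
Local Open Scope ring_scope.

Definition Zd (d : nat) := 'rV[int]_d.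

Definition Nd (d : nat) : Zd d -> Prop := fun v => forall i : 'I_d, 0 <= v ord0 i.

Definition is_complement (d : nat) (W M : Zd d -> Prop) : Prop :=
  (exists m, M m) /\
  forall z : Zd d, exists w m, W w /\ M m /\ z = w + m.

Definition is_minimal_complement (d : nat) (W M : Zd d -> Prop) : Prop :=
  is_complement W M /\
  forall M' : Zd d -> Prop,
    (forall x, M' x -> M x) -> (exists x, M x /\ ~ M' x) -> ~ is_complement W M'.

(* Main.v *)
Require Import Defs.
From mathcomp Require Import all_boot all_order all_algebra.
From mathcomp Require Import zify.
Import Order.TTheory GRing.Theory Num.Theory.
Local Open Scope ring_scope.

Lemma remove_one (d : nat) (hd : (1 <= d)%N) (M : Zd d -> Prop) (m0 : Zd d) :
  is_complement (@Nd d) M ->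
  is_complement (@Nd d) (fun x => M x /\ x <> m0).
Proof.
move=> [_ HM].
have key : forall z : Zd d, exists w m, Nd w /\ (M m /\ m <> m0) /\ z = w + m.
  move=> z.
  pose z2 : Zd d := \row_i Num.min (z ord0 i) (m0 ord0 i - 1).
  have [w [m [Hw [Hm E]]]] := HM z2.
  have Em : forall i, m ord0 i = z2 ord0 i - w ord0 i.
    by move=> i; rewrite E !mxE addrAC subrr add0r.
  exists (z - m), m; split; last split; [|split|].
  - move=> i; rewrite !mxE Em /z2 mxE subr_ge0.
    have h1 : Num.min (z ord0 i) (m0 ord0 i - 1) <= z ord0 i by rewrite ge_min lexx.
    apply: le_trans h1; rewrite gerBl; exact: Hw.
  - exact: Hm.
  - move=> Hmm; have := Em (Ordinal hd); rewrite Hmm /z2 mxE.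
    have h1 : Num.min (z ord0 (Ordinal hd)) (m0 ord0 (Ordinal hd) - 1) <= m0 ord0 (Ordinal hd) - 1
      by rewrite ge_min lexx orbT.
    move=> Ht; have h2 : m0 ord0 (Ordinal hd) <= m0 ord0 (Ordinal hd) - 1.
      by apply: le_trans h1; rewrite {1}Ht gerBl; exact: Hw.
    move: h2; set x := m0 ord0 (Ordinal hd); lia.
  - by rewrite subrK.
split; last exact: key.
by have [w [m [_ [Hm _]]]] := key 0; exists m.
Qed.

Lemma no_min (d : nat) (hd : (1 <= d)%N) (M : Zd d -> Prop) :
  ~ is_minimal_complement (@Nd d) M.
Proof.
move=> [HC Hmin].
have [m0 Hm0] := HC.1.
apply: (Hmin (fun x => M x /\ x <> m0)).
- by move=> x [].
- by exists m0; split => // -[].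
- exact: remove_one.
Qed.

Theorem corollary3p2 (d : nat) (hd : (1 <= d)%N) :
  (exists M : Zd d -> Prop, is_complement (@Nd d) M) /\
  (forall M : Zd d -> Prop, ~ is_minimal_complement (@Nd d) M) /\
  (forall M : Zd d -> Prop, is_complement (@Nd d) M ->
     ~ exists M' : Zd d -> Prop,
         (forall x, M' x -> M x) /\ is_minimal_complement (@Nd d) M').
Proof.
split; [|split].
- exists (fun _ => True); split; first by exists 0.
  move=> z; exists 0, z; split; last by rewrite add0r.
  by move=> i; rewrite mxE.
- exact: no_min.
- move=> M _ [M0 [_ H]]; exact: (@no_min d hd M0 H).
Qed.
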